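(* For integers $n \geq 2$, let $L_n(x) = \left\lfloor \frac{x(2^n - x)}{2^{n-2}} \right\rfloor$ for $x \in X_n = \{1, 2, \dots, 2^n - 1\}$, and call $n$ undesirable if there exists $x \in X_n$ with $L_n(x) = 2^{n-1}$. Then an integer $n \geq 2$ is undesirable if there exists an integer $m$ with $2^{n-2}\sqrt{2} - \sqrt{2}/4 \leq m \leq 2^{n-2}\sqrt{2}$. *)

(* Defs.v *)
From Stdlib Require Export ZArith Reals.

(* L_n(x) = floor( x (2^n - x) / 2^(n-2) ); Z.div is floor division
   (divisor 2^(n-2) > 0 for n >= 2). *)
Definition L (n : Z) (x : Z) : Z :=
  (x * (2 ^ n - x)) / 2 ^ (n - 2).

Definition inX (n : Z) (x : Z) : Prop := (1 <= x <= 2 ^ n - 1)%Z.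

Definition undesirable (n : Z) : Prop :=
  exists x : Z, inX n x /\ L n x = (2 ^ (n - 1))%Z.

(* Main.v *)
Require Import Defs.
From Stdlib Require Import ZArith Reals Lra Lia Psatz.
Open Scope R_scope.

Theorem lemma2p2 (n : Z) (hn : (2 <= n)%Z) :
  (exists m : Z,
      2 ^ Z.to_nat (n - 2) * sqrt 2 - sqrt 2 / 4 <= IZR m /\
      IZR m <= 2 ^ Z.to_nat (n - 2) * sqrt 2) ->
  undesirable n.
Proof.
  intros [m [H1 H2]].
  set (k := Z.to_nat (n - 2)) in *.
  assert (Hn : n = (Z.of_nat k + 2)%Z) by (unfold k; lia).
  set (K := (2 ^ Z.of_nat k)%Z).
  assert (HK : 2 ^ k = IZR K) by (unfold K; rewrite <- pow_IZR; reflexivity).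
  rewrite HK in H1, H2.
  assert (HKpos : (1 <= K)%Z) by (unfold K;
    assert (0 < 2 ^ Z.of_nat k)%Z by (apply Z.pow_pos_nonneg; lia); lia).
  apply IZR_le in HKpos.
  assert (Hs : sqrt 2 * sqrt 2 = 2) by (apply sqrt_sqrt; lra).
  assert (Hs0 : 0 < sqrt 2) by (apply sqrt_lt_R0; lra).
  assert (Hs2 : sqrt 2 < 2) by nra.
  assert (Hm0 : 0 < IZR m) by nra.
  assert (Hup : IZR m * IZR m <= 2 * IZR K * IZR K) by nra.
  assert (Hlo : 2 * IZR K * IZR K - IZR K < IZR m * IZR m).
  { assert (Ha : 0 <= IZR K * sqrt 2 - sqrt 2 / 4) by nra.
    assert (Hsq : (IZR K * sqrt 2 - sqrt 2 / 4) * (IZR K * sqrt 2 - sqrt 2 / 4)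
                  = 2 * IZR K * IZR K - IZR K + 1/8).
    { replace ((IZR K * sqrt 2 - sqrt 2 / 4) * (IZR K * sqrt 2 - sqrt 2 / 4))
        with ((sqrt 2 * sqrt 2) * (IZR K * IZR K - IZR K / 2 + 1/16)) by field.
      rewrite Hs. field. }
    assert ((IZR K * sqrt 2 - sqrt 2 / 4) * (IZR K * sqrt 2 - sqrt 2 / 4) <= IZR m * IZR m)
      by (apply Rmult_le_compat; lra).
    lra. }
  assert (Hup' : (m * m <= 2 * K * K)%Z) by (apply le_IZR; rewrite !mult_IZR; lra).
  assert (Hlo' : (2 * K * K - K < m * m)%Z)
    by (apply lt_IZR; rewrite minus_IZR, !mult_IZR; lra).
  apply lt_IZR in Hm0. apply le_IZR in HKpos.
  clear Hup Hlo.
  exists (2 * K - m)%Z.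
  assert (E1 : (2 ^ n = 4 * K)%Z).
  { rewrite Hn, Z.pow_add_r by lia. unfold K. lia. }
  assert (E2 : (2 ^ (n - 1) = 2 * K)%Z).
  { replace (n - 1)%Z with (Z.of_nat k + 1)%Z by lia.
    rewrite Z.pow_add_r by lia. unfold K. lia. }
  assert (E3 : (2 ^ (n - 2) = K)%Z).
  { unfold K. f_equal. lia. }
  assert (Hm2K : (m < 2 * K)%Z) by nia.
  unfold inX, L. rewrite E1, E2, E3. split; [lia|].
  symmetry. apply Z.div_unique_pos with (2 * K * K - m * m)%Z; [lia|].
  ring.
Qed.
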